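(* Let $p$ be a prime and $q\in\mathbb{N}$, and let $n=pq$ or $n=pq+1$. Then the fixed point space $C_n(\mathbb{C})^{\mathbb{Z}/p}$ is homeomorphic to $C_q(\mathbb{C}^* )$.
   Context: $C_n(Y)$ denotes the unordered configuration space of $n$ distinct points in $Y$. The group $\mathbb{Z}/p$, generated by $\zeta=e^{2\pi i/p}$, acts on $C_n(\mathbb{C})$ by rotation: $\{z_1,\dots,z_n\}\mapsto\{\zeta z_1,\dots,\zeta z_n\}$. *)

(* Defs.v *)
(* The complex plane C is modelled as R * R
   (R : realType) with the library's product topology. *)
From HB Require Import structures.
From mathcomp Require Import all_boot all_order all_algebra.
From mathcomp Require Import all_classical all_reals all_analysis.
Unset Printing Implicit Defensive.
Import numFieldNormedType.Exports.
Import Order.TTheory GRing.Theory Num.Theory.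
Local Open Scope classical_set_scope.
Local Open Scope ring_scope.

Definition prodn_open {X : topologicalType} (n : nat) (O : set ('I_n -> X)) : Prop :=
  forall x, O x -> exists U : 'I_n -> set X,
    (forall i, open (U i) /\ U i (x i)) /\ [set y | forall i, U i (y i)] `<=` O.

Definition conf_ord {X : topologicalType} (Y : set X) (n : nat) : set ('I_n -> X) :=
  [set x | injective x /\ forall i, Y (x i)].

Definition conf {X : topologicalType} (Y : set X) (n : nat) : set (set X) :=
  (fun x : 'I_n -> X => range x) @` conf_ord Y n.

(* Quotient topology on C_n(Y) induced by F_n(Y) -> C_n(Y), x |-> {x_1..x_n}:
   U ⊆ C_n(Y) is open iff its preimage is open in F_n(Y) (subspace of X^n). *)
Definition conf_opens {X : topologicalType} (Y : set X) (n : nat) : set (set (set X)) :=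
  [set U | U `<=` conf Y n /\
    exists V, prodn_open n V /\
      V `&` conf_ord Y n = (fun x : 'I_n -> X => range x) @^-1` U `&` conf_ord Y n].

Definition subspace_opens {T : Type} (A : set T) (tX : set (set T)) : set (set T) :=
  [set O | exists V, tX V /\ O = V `&` A].

Definition homeomorphic {T U : Type} (A : set T) (tA : set (set T))
    (B : set U) (tB : set (set U)) : Prop :=
  exists (f : T -> U) (g : U -> T),
    (forall a, A a -> B (f a)) /\ (forall b, B b -> A (g b)) /\
    (forall a, A a -> g (f a) = a) /\ (forall b, B b -> f (g b) = b) /\
    (forall O, tB O -> tA (f @^-1` O `&` A)) /\
    (forall O, tA O -> tB (g @^-1` O `&` B)).

(* Multiplication by zeta = exp(2 pi i / p) on C = R * R. *)
Definition rotC {R : realType} (p : nat) (z : R * R) : R * R :=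
  let c := cos (2 * pi / p%:R) in
  let s := sin (2 * pi / p%:R) in
  (c * z.1 - s * z.2, s * z.1 + c * z.2).

Definition Cstar (R : realType) : set (R * R) := [set z | z <> (0, 0)].

(* Fixed point set C_n(C)^{Z/p}: configurations S with zeta S = S
   (invariance under the generator = invariance under Z/p). *)
Definition fixed_conf (R : realType) (p n : nat) : set (set (R * R)) :=
  [set S | conf [set: R * R] n S /\ rotC p @` S = S].

Definition fixed_conf_opens (R : realType) (p n : nat) : set (set (set (R * R))) :=
  subspace_opens (fixed_conf R p n) (conf_opens [set: R * R] n).

(* Main.v *)
Require Import Defs.
From HB Require Import structures.
From mathcomp Require Import all_boot all_order all_algebra.
From mathcomp Require Import all_classical all_reals all_analysis.
From mathcomp Require Import zify lra.
Import numFieldNormedType.Exports.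
Import Order.TTheory GRing.Theory Num.Theory.
Local Open Scope classical_set_scope.
Local Open Scope ring_scope.

Record cpx (R : Type) : Type := Cpx { cRe : R; cIm : R }.
Arguments Cpx {R}.
Arguments cRe {R}.
Arguments cIm {R}.

Definition cpx2p {R : Type} (z : cpx R) : R * R := (cRe z, cIm z).
Definition p2cpx {R : Type} (w : R * R) : cpx R := Cpx w.1 w.2.
Lemma cpx2pK {R : Type} : cancel (@cpx2p R) p2cpx. Proof. by case. Qed.
Lemma p2cpxK {R : Type} : cancel (@p2cpx R) cpx2p. Proof. by case. Qed.

HB.instance Definition _ (R : eqType) := Equality.copy (cpx R) (can_type (@cpx2pK R)).
HB.instance Definition _ (R : choiceType) := Choice.copy (cpx R) (can_type (@cpx2pK R)).

Section CpxField.
Variable R : realType.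
Local Notation C := (cpx R).

Definition addc (x y : C) := Cpx (cRe x + cRe y) (cIm x + cIm y).
Definition oppc (x : C) := Cpx (- cRe x) (- cIm x).
Definition zeroc : C := Cpx 0 0.

Lemma addcA : associative addc.
Proof. by move=> [a b] [c d] [e f]; rewrite /addc /= !addrA. Qed.
Lemma addcC : commutative addc.
Proof. by move=> [a b] [c d]; rewrite /addc /= addrC [b + _]addrC. Qed.
Lemma add0c : left_id zeroc addc.
Proof. by move=> [a b]; rewrite /addc /= !add0r. Qed.
Lemma addNc : left_inverse zeroc oppc addc.
Proof. by move=> [a b]; rewrite /addc /= !addNr. Qed.

HB.instance Definition _ := GRing.isZmodule.Build C addcA addcC add0c addNc.

Lemma addcE (x y : C) : x + y = addc x y. Proof. by []. Qed.
Lemma oppcE (x : C) : - x = oppc x. Proof. by []. Qed.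
Lemma zerocE : (0 : C) = zeroc. Proof. by []. Qed.

Definition mulc (x y : C) :=
  Cpx (cRe x * cRe y - cIm x * cIm y) (cRe x * cIm y + cIm x * cRe y).
Definition onec : C := Cpx 1 0.

Lemma mulcA : associative mulc.
Proof. move=> [a b] [c d] [e f]; rewrite /mulc /=; congr Cpx; lra. Qed.
Lemma mulcC : commutative mulc.
Proof. move=> [a b] [c d]; rewrite /mulc /=; congr Cpx; lra. Qed.
Lemma mul1c : left_id onec mulc.
Proof. move=> [a b]; rewrite /mulc /=; congr Cpx; lra. Qed.
Lemma mulc_addl : left_distributive mulc (@GRing.add C).
Proof. move=> [a b] [c d] [e f]; rewrite !addcE /mulc /addc /=; congr Cpx; lra. Qed.
Lemma onec_neq0 : onec != 0.
Proof. apply/eqP => -[] /eqP; by rewrite oner_eq0. Qed.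

HB.instance Definition _ := GRing.Zmodule_isComNzRing.Build C
  mulcA mulcC mul1c mulc_addl onec_neq0.

Definition invc (x : C) := let n2 := cRe x ^+ 2 + cIm x ^+ 2 in
  Cpx (cRe x / n2) (- (cIm x / n2)).

Lemma mulVc : forall x : C, x != 0 -> mulc (invc x) x = 1.
Proof.
move=> [a b] hab; rewrite /mulc /invc /=.
have n0 : a ^+ 2 + b ^+ 2 != 0.
  apply: contra hab; rewrite paddr_eq0 ?sqr_ge0 // !expf_eq0 /= => /andP[/eqP-> /eqP->].
  by [].
rewrite !mulNr opprK.
rewrite ![_ / _ * _]mulrAC [b * a]mulrC subrr -mulrDl mulfV //.
Qed.
Lemma invc0 : invc 0 = 0.
Proof. by rewrite /invc /= !mul0r oppr0. Qed.

HB.instance Definition _ := GRing.ComNzRing_isField.Build C mulVc invc0.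


Lemma mulcE (a b c d : R) : Cpx a b * Cpx c d = Cpx (a * c - b * d) (a * d + b * c) :> C.
Proof. by []. Qed.
Lemma addcE' (a b c d : R) : Cpx a b + Cpx c d = Cpx (a + c) (b + d) :> C.
Proof. by []. Qed.
Lemma oppcE' (a b : R) : - Cpx a b = Cpx (- a) (- b) :> C.
Proof. by []. Qed.
Lemma subcE (a b c d : R) : Cpx a b - Cpx c d = Cpx (a - c) (b - d) :> C.
Proof. by []. Qed.
Lemma zerocE' : (0 : C) = Cpx 0 0. Proof. by []. Qed.
Lemma onecE : (1 : C) = Cpx 1 0. Proof. by []. Qed.
Lemma cpx_eta (z : C) : z = Cpx (cRe z) (cIm z). Proof. by case: z. Qed.

Definition N (z : C) : R := cRe z ^+ 2 + cIm z ^+ 2.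

Lemma N_ge0 z : 0 <= N z.
Proof. by rewrite /N addr_ge0 ?sqr_ge0. Qed.

Lemma N_eq0 z : N z = 0 -> z = 0.
Proof.
case: z => a b; rewrite /N /= => /eqP.
rewrite paddr_eq0 ?sqr_ge0 // !expf_eq0 /= => /andP[/eqP-> /eqP->]; by [].
Qed.

Lemma N0 : N 0 = 0. Proof. by rewrite /N /= expr0n /= addr0. Qed.

Lemma NM z w : N (z * w) = N z * N w.
Proof. case: z => a b; case: w => c d; rewrite mulcE /N /=; lra. Qed.

Lemma NN z : N (- z) = N z.
Proof. case: z => a b; rewrite oppcE' /N /=; lra. Qed.

Lemma NB z w : N (z - w) = N (w - z).
Proof. by rewrite -NN opprB. Qed.

Lemma ND_le z w : N (z + w) <= 2 * N z + 2 * N w.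
Proof. case: z => a b; case: w => c d; rewrite addcE' /N /=; have := sqr_ge0 (a - c); have := sqr_ge0 (b - d); lra. Qed.

Lemma N_tri z w u : N (z - u) <= 2 * N (z - w) + 2 * N (w - u).
Proof. by have := ND_le (z - w) (w - u); rewrite addrA subrK. Qed.

Lemma realcX (x : R) k : Cpx x 0 ^+ k = Cpx (x ^+ k) 0 :> C.
Proof.
elim: k => [|k IH]; first by rewrite !expr0.
by rewrite !exprS IH mulcE !mulr0 !mul0r subr0 addr0.
Qed.

Definition expi (t : R) : C := Cpx (cos t) (sin t).

Lemma expiD s t : expi s * expi t = expi (s + t).
Proof. rewrite /expi mulcE cosD sinD; congr Cpx; lra. Qed.

Lemma expiX t k : expi t ^+ k = expi (k%:R * t).
Proof.
elim: k => [|k IH]; first by rewrite expr0 mul0r /expi cos0 sin0.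
by rewrite exprS IH expiD -{1}(mul1r t) -mulrDl -natr1 addrC.
Qed.

Lemma N_expi t : N (expi t) = 1.
Proof. by rewrite /N /= cos2Dsin2. Qed.

Lemma expi0 : expi 0 = 1.
Proof. by rewrite /expi cos0 sin0. Qed.

End CpxField.

Arguments N {R}.
Arguments expi {R}.
Arguments N_ge0 {R}. Arguments N_eq0 {R}. Arguments NM {R}. Arguments NN {R}. Arguments NB {R}.
Arguments ND_le {R}. Arguments N_tri {R}. Arguments realcX {R}. Arguments N_expi {R}. Arguments N0 {R}.

Section Roots.
Variable R : realType.
Local Notation C := (cpx R).

Definition zeta (p : nat) : C := expi (2 * pi / p%:R).

Lemma zetaX p : (0 < p)%N -> zeta p ^+ p = 1.
Proof.
move=> p0; rewrite /zeta expiX mulrC divfK; last by rewrite pnatr_eq0 -lt0n.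
by rewrite /expi mulr_natl cos2pi sin2pi.
Qed.

Lemma zeta_neq1 p : (1 < p)%N -> zeta p != 1.
Proof.
move=> p1; apply/eqP; rewrite /zeta /expi onecE => -[hc hs].
have p0 : (0 : R) < p%:R by rewrite ltr0n; apply: ltn_trans p1.
have t0 : 0 < 2 * pi / p%:R :> R by rewrite divr_gt0 // mulr_gt0 // pi_gt0.
have [p2|p2] := eqVneq p 2%N.
  move: hc; rewrite p2 mulrC mulKf //; first by rewrite cospi => /eqP; lra.
have tlt : 2 * pi / p%:R < pi :> R.
  rewrite ltr_pdivrMr // mulrC ltr_pM2l ?pi_gt0 //.
  rewrite ltr_nat; move: p1 p2 => h1 h2; lia.
have h : 0 < sin (2 * pi / p%:R) :> R by apply: sin_gt0_pi; rewrite t0 tlt.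
by move: h; rewrite -hs ltxx.
Qed.

Lemma zeta_prim p : prime p -> p.-primitive_root (zeta p).
Proof.
move=> pp; have p0 := prime_gt0 pp.
case: (prim_order_exists p0 (@zetaX p p0)) => m pm mp.
case/primeP: pp => p1 /(_ m mp) /orP[/eqP m1|/eqP mp'].
  by move: (prim_expr_order pm); rewrite m1 expr1 => /eqP; rewrite (negbTE (@zeta_neq1 p p1)).
by rewrite mp' in pm.
Qed.

Lemma N_zetaX p k : N (zeta p ^+ k) = 1.
Proof. by rewrite /zeta expiX N_expi. Qed.

Lemma root_exists p (w : C) : (0 < p)%N -> exists z : C, z ^+ p = w.
Proof.
move=> p0; have [->|w0] := eqVneq w 0.
  by exists 0; rewrite expr0n eqn0Ngt p0.
case: w w0 => a b w0.
set r := Num.sqrt (a ^+ 2 + b ^+ 2).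
have n0 : 0 < a ^+ 2 + b ^+ 2.
  rewrite lt_def addr_ge0 ?sqr_ge0 // andbT; apply: contra w0 => /eqP h.
  by apply/eqP; have := @N_eq0 R (Cpx a b); rewrite /N /= => ->.
have r0 : 0 < r by rewrite sqrtr_gt0.
have rr : r ^+ 2 = a ^+ 2 + b ^+ 2 by rewrite sqr_sqrtr // ltW.
have ar : `|a| <= r.
  by rewrite -sqrtr_sqr ler_wsqrtr // lerDl sqr_ge0.
have c1 : -1 <= a / r <= 1.
  by rewrite -ler_norml normrM normfV (gtr0_norm r0) ler_pdivrMr // mul1r.
set phi := if 0 <= b then acos (a / r) else - acos (a / r).
have cphi : cos phi = a / r.
  by rewrite /phi; case: ifP => _; rewrite ?cosN acosK // in_itv /=.
have sphi : sin phi = b / r.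
  have sa : sin (acos (a / r)) = `|b| / r.
    have e : 1 - (a / r) ^+ 2 = (b / r) ^+ 2.
      rewrite !expr_div_n; have r2 : r ^+ 2 != 0 by rewrite expf_neq0 // lt0r_neq0.
      by rewrite -{1}(divff r2) -mulrBl rr addrC addKr.
    by rewrite sin_acos // e sqrtr_sqr normrM normfV (gtr0_norm r0).
  rewrite /phi; case: ifP => hb; rewrite ?sinN sa.
    by rewrite ger0_norm.
  by rewrite ltr0_norm ?mulNr ?opprK // ltNge hb.
set rho := r `^ (p%:R^-1).
have rho0 : 0 <= rho by apply: powR_ge0.
have rhop : rho ^+ p = r.
  rewrite -powR_mulrn // -powRrM mulVf ?pnatr_eq0 -?lt0n // powRr1 //.
  exact: ltW.
exists (Cpx rho 0 * expi (phi / p%:R)).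
rewrite exprMn realcX rhop expiX [_%:R * _]mulrC divfK ?pnatr_eq0 -?lt0n //.
rewrite /expi cphi sphi mulcE !mul0r subr0 addr0.
by congr Cpx; rewrite mulrC divfK // lt0r_neq0.
Qed.

End Roots.

Section Alg.
Variables (R : realType) (p : nat).
Hypothesis pp : prime p.
Local Notation C := (cpx R).
Local Notation z := (zeta R p).

Lemma p_gt0 : (0 < p)%N. Proof. exact: prime_gt0. Qed.
Lemma p_gt1 : (1 < p)%N. Proof. exact: prime_gt1. Qed.
Lemma primz : p.-primitive_root z. Proof. exact: zeta_prim. Qed.
Lemma zp1 : z ^+ p = 1. Proof. exact: zetaX p_gt0. Qed.
Lemma zX_neq0 k : z ^+ k != 0.
Proof. by apply/eqP => h; have := N_zetaX R p k; rewrite h N0 => /eqP; rewrite eq_sym oner_eq0. Qed.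

Lemma NzX (k : nat) (w : C) : N (z ^+ k * w) = N w.
Proof. by rewrite NM N_zetaX mul1r. Qed.

Lemma zXp k (w : C) : (z ^+ k * w) ^+ p = w ^+ p.
Proof. by rewrite exprMn exprAC zp1 expr1n mul1r. Qed.

Lemma N1 : N (1 : C) = 1.
Proof. by rewrite /N /= expr1n expr0n addr0. Qed.

Lemma N_prod (r : seq nat) (F : nat -> C) :
  N (\prod_(i <- r) F i) = \prod_(i <- r) N (F i).
Proof. exact: (big_morph N (@NM R) N1). Qed.

Lemma factorXY (w z0 : C) :
  \prod_(0 <= k < p) (w - z ^+ k * z0) = w ^+ p - z0 ^+ p.
Proof.
have [->|z00] := eqVneq z0 0.
  rewrite expr0n eqn0Ngt p_gt0 subr0.
  under eq_bigr do rewrite mulr0 subr0.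
  by rewrite prodr_const_nat subn0.
have h := congr1 (fun P => P.[w / z0]) (factor_Xn_sub_1 primz).
move: h; rewrite /= horner_prod hornerD hornerN hornerXn hornerC.
under eq_bigr do rewrite hornerXsubC.
move=> h.
transitivity (\prod_(0 <= k < p) (z0 * (w / z0 - z ^+ k))).
  by apply: eq_bigr => k _; rewrite mulrBr [z0 * (w / z0)]mulrC divfK // [z0 * _]mulrC.
rewrite big_split /= prodr_const_nat subn0 h mulrBr mulr1 -exprMn.
by rewrite mulrC divfK.
Qed.

Lemma fiber (w z0 : C) : z0 != 0 -> w ^+ p = z0 ^+ p ->
  exists2 k, (k < p)%N & w = z ^+ k * z0.
Proof.
move=> z00 e.
have h : (w / z0) ^+ p = 1 by rewrite expr_div_n e divff // expf_neq0.
case: (prim_rootP primz h) => k hk.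
by exists k => //; rewrite -hk divfK.
Qed.

Lemma orbit_inj (z0 : C) i j : z0 != 0 -> z ^+ i * z0 = z ^+ j * z0 ->
  i = j %[mod p].
Proof.
move=> z00 /(mulIf z00) /eqP; by rewrite (eq_prim_root_expr primz) => /eqP.
Qed.

Lemma near_root (d : R) (u z0 : C) : 0 < d -> N (u - z0 ^+ p) < d ^+ p ->
  exists2 w : C, w ^+ p = u & N (w - z0) < d.
Proof.
move=> d0 hu.
have [w1 hw1] := @root_exists R p u p_gt0.
have [k hk] : exists k, N (w1 - z ^+ k * z0) < d.
  apply: contrapT => hn.
  have hall : forall k, d <= N (w1 - z ^+ k * z0).
    move=> k; rewrite leNgt; apply/negP => hk; apply: hn; by exists k.
  move: hu; rewrite -hw1 -factorXY N_prod.
  have : \prod_(0 <= k < p) d <= \prod_(0 <= k < p) N (w1 - z ^+ k * z0).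
    by apply: ler_prod => k _; rewrite (ltW d0) hall.
  rewrite prodr_const_nat subn0 => h1 h2.
  by have := lt_le_trans h2 h1; rewrite ltxx.
exists (w1 / z ^+ k).
  by rewrite expr_div_n exprAC zp1 expr1n divr1.
rewrite -(NzX k) mulrBr [z ^+ k * (w1 / _)]mulrC divfK //; exact: zX_neq0.
Qed.

Lemma powC_cont (z0 : C) (e : R) : 0 < e ->
  exists2 d : R, 0 < d & forall w : C, N (w - z0) < d -> N (w ^+ p - z0 ^+ p) < e.
Proof.
move=> e0.
set M : R := 2 + 8 * N z0.
have M0 : 0 < M by rewrite /M; have := N_ge0 z0; lra.
have Mp0 : 0 < M ^+ p.-1 by apply: exprn_gt0.
exists (Num.min 1 (e / M ^+ p.-1)).
  by rewrite lt_min ltr01 divr_gt0.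
move=> w; rewrite lt_min => /andP[h1 h2].
rewrite -factorXY N_prod big_ltn ?p_gt0 // expr0 mul1r.
have hb : \prod_(1 <= k < p) N (w - z ^+ k * z0) <= M ^+ p.-1.
  rewrite -subn1 -prodr_const_nat; apply: ler_prod => k _; rewrite N_ge0 /=.
  have t1 := N_tri w z0 (z ^+ k * z0).
  have t2 := ND_le z0 (- (z ^+ k * z0)); rewrite NN NzX in t2.
  rewrite /M; lra.
have hN := N_ge0 (w - z0).
apply: (le_lt_trans (y := N (w - z0) * M ^+ p.-1)).
  by rewrite ler_pM // prodr_ge0 // => k _; apply: N_ge0.
by rewrite -ltr_pdivlMr.
Qed.

End Alg.

Section GenTop.
Variable X : topologicalType.

Definition boxP (n : nat) (G : set X -> Prop) (y : 'I_n -> X) : Prop :=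
  exists B : 'I_n -> set X, (forall i, open (B i) /\ B i (y i)) /\
    forall y' : 'I_n -> X, injective y' -> (forall i, B i (y' i)) -> G (range y').

Lemma boxP_open n G : prodn_open n (boxP n G).
Proof.
move=> y [B [hB1 hB2]]; exists B; split => // y' hy'.
by exists B; split => // i; split; [exact: (hB1 i).1 | exact: hy'].
Qed.

Lemma local_open (Y : set X) n (U : set (set X)) :
  U `<=` conf Y n ->
  (forall x, conf_ord Y n x -> U (range x) ->
     exists B : 'I_n -> set X, (forall i, open (B i) /\ B i (x i)) /\
       forall x', conf_ord Y n x' -> (forall i, B i (x' i)) -> U (range x')) ->
  conf_opens Y n U.
Proof.
move=> hsub hloc; split => //.
exists (boxP n (fun S => forall x', conf_ord Y n x' -> range x' = S -> U S)).
split.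
  move=> y [B [hB1 hB2]]; exists B; split => // y' hy'.
  by exists B; split => // i; split; [exact: (hB1 i).1 | exact: hy'].
apply/seteqP; split.
  move=> x [hx1 hx2]; split => //.
  case: hx1 => B [hB1 hB2].
  exact: (hB2 x hx2.1 (fun i => (hB1 i).2) x hx2 erefl).
move=> x [hx1 hx2]; split => //.
have [B [hB1 hB2]] := hloc x hx2 hx1.
exists B; split => // x' ix' hBx' x'' hx'' ex.
apply: (hB2 x') => //; split => // i.
have : range x'' (x' i) by rewrite ex; exists i.
by case=> j _ <-; exact: hx''.2.
Qed.

Lemma boxP_perm n (G : set X -> Prop) (y y' : 'I_n -> X) :
  injective y -> injective y' -> range y = range y' -> boxP n G y' -> boxP n G y.
Proof.
move=> iy iy' ey [B [hB1 hB2]].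
have hs : forall a, exists b, y' b = y a.
  move=> a; have : range y' (y a) by rewrite -ey; exists a.
  by case=> b _ hb; exists b.
have ht : forall b, exists a, y a = y' b.
  move=> b; have : range y (y' b) by rewrite ey; exists b.
  by case=> a _ ha; exists a.
have [sg hsg] := choice hs.
have [tau htau] := choice ht.
have st : forall b, sg (tau b) = b by move=> b; apply: iy'; rewrite hsg htau.
have ts : forall a, tau (sg a) = a by move=> a; apply: iy; rewrite htau hsg.
exists (fun a => B (sg a)); split.
  by move=> a; split; [exact: (hB1 _).1 | rewrite -hsg; exact: (hB1 _).2].
move=> z iz hz.
have -> : range z = range (z \o tau).
  apply/seteqP; split => w [a _ <-].
    by exists (sg a) => //=; rewrite ts.
  by exists (tau a).
apply: hB2.
  by move=> b b' /= /iz h; rewrite -(st b) -(st b') h.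
by move=> b /=; rewrite -{1}(st b); exact: hz.
Qed.

End GenTop.

Lemma exists_small (R : realType) (I : finType) (P : I -> R -> Prop) :
  (forall i, exists2 d, 0 < d & P i d) ->
  (forall i d d', 0 < d' -> d' <= d -> P i d -> P i d') ->
  exists2 d, 0 < d & forall i, P i d.
Proof.
move=> hex hmon.
suff : forall s : seq I, exists2 d, 0 < d & forall i, i \in s -> P i d.
  by case/(_ (enum I)) => d d0 h; exists d => // i; apply: h; rewrite mem_enum.
elim => [|a s [d d0 IH]]; first by exists 1.
have [da da0 hda] := hex a.
exists (Num.min d da); first by rewrite lt_min d0 da0.
move=> i; rewrite inE => /orP[/eqP->|his].
  by apply: (hmon _ da); rewrite ?lt_min ?d0 ?da0 ?ge_min ?lexx ?orbT.
by apply: (hmon _ d); rewrite ?lt_min ?d0 ?da0 ?ge_min ?lexx //; apply: IH.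
Qed.

Lemma count_partition (T U : eqType) (f : T -> U) (k : nat) (t : seq U) (s : seq T) :
  uniq t -> (forall x, x \in s -> f x \in t) ->
  (forall u, u \in t -> count (fun x => f x == u) s = k) -> size s = (k * size t)%N.
Proof.
elim: t s => [|u t IH] s /=.
  case: s => [|x s] _ h _; first by rewrite muln0.
  by move: (h x); rewrite inE eqxx => /(_ isT).
move=> /andP[ut ut'] hs hc.
rewrite -(count_predC (fun x => f x == u)) hc ?inE ?eqxx // -size_filter.
rewrite (IH (seq.filter (predC (fun x => f x == u)) s)) //.
- by rewrite mulnS.
- move=> x; rewrite mem_filter => /andP[/= hxu hx].
  by move: (hs x hx); rewrite inE (negbTE hxu).
- move=> u' hu'; rewrite count_filter -(hc u'); last by rewrite inE hu' orbT.
  apply: eq_count => x /=; case: eqP => // ->.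
  by apply/negP => /eqP hu; move: ut; rewrite -hu hu'.
Qed.

Definition toC {R : Type} (w : R * R) : cpx R := Cpx w.1 w.2.
Definition ofC {R : Type} (u : cpx R) : R * R := (cRe u, cIm u).
Lemma toCK {R : Type} (w : R * R) : ofC (toC w) = w. Proof. by case: w. Qed.
Lemma ofCK {R : Type} (u : cpx R) : toC (ofC u) = u. Proof. by case: u. Qed.
Lemma toC_inj {R : Type} : injective (@toC R).
Proof. by move=> x y /(congr1 ofC); rewrite !toCK. Qed.

Section Main.
Variables (R : realType) (p q n : nat) (e : bool).
Hypotheses (pp : prime p) (hn : n = (p * q + e)%N).
Local Notation C := (cpx R).
Local Notation z := (zeta R p).
Local Notation RR := (R * R)%type.

Let pgt1 : (1 < p)%N := @p_gt1 p pp.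
Let pgt0 : (0 < p)%N := @p_gt0 p pp.
Definition O0 : RR := (0, 0).
Definition Pw (w : RR) : RR := ofC (toC w ^+ p).
Definition rk (k : nat) (w : RR) : RR := ofC (z ^+ k * toC w).
Definition fS (S : set RR) : set RR := Pw @` (S `&` Cstar R).
Definition gT (T : set RR) : set RR := Pw @^-1` T `|` [set w | e /\ w = O0].

Lemma toC_O : toC O0 = 0. Proof. by []. Qed.
Lemma CstarE w : Cstar R w <-> toC w != 0.
Proof.
split => [h|h]; first by apply/eqP => h0; apply: h; rewrite -[w]toCK h0.
by move=> h0; move: h; rewrite h0 toC_O eqxx.
Qed.
Lemma toC_rk k w : toC (rk k w) = z ^+ k * toC w. Proof. exact: ofCK. Qed.
Lemma toC_Pw w : toC (Pw w) = toC w ^+ p. Proof. exact: ofCK. Qed.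

Lemma rotCE w : rotC p w = rk 1 w.
Proof.
apply: toC_inj; rewrite toC_rk expr1 /zeta /expi /toC /rotC /= mulcE.
by congr Cpx; rewrite addrC.
Qed.

Lemma rk_neq0 k w : toC w != 0 -> toC (rk k w) != 0.
Proof. by move=> h; rewrite toC_rk mulf_neq0 // zX_neq0. Qed.

Lemma Pw_rk k w : Pw (rk k w) = Pw w.
Proof. by apply: toC_inj; rewrite !toC_Pw toC_rk zXp. Qed.

Lemma Pw_neq0 w : toC w != 0 -> toC (Pw w) != 0.
Proof. by move=> h; rewrite toC_Pw expf_neq0. Qed.

Lemma rkS k w : rk k.+1 w = rotC p (rk k w).
Proof. by rewrite rotCE; apply: toC_inj; rewrite !toC_rk expr1 mulrA -exprS. Qed.

Lemma fixed_rk S k w : rotC p @` S = S -> S w -> S (rk k w).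
Proof.
move=> hS; elim: k => [|k IH] hw.
  by rewrite /rk expr0 mul1r toCK.
by rewrite rkS -hS; exists (rk k w) => //; apply: IH.
Qed.


Lemma arith_pq a b (c d : bool) : (p * a + c = p * b + d)%N -> a = b /\ c = d.
Proof.
move=> h.
have hcd : (c : nat) = d.
  have := congr1 (modn^~ p) h; rewrite /= ![(p * _)%N]mulnC !modnMDl.
  by rewrite !modn_small // (leq_ltn_trans _ pgt1) // leq_b1.
split; last by move: hcd; clear h; case: c; case: d.
by move: h; rewrite hcd => /addIn /eqP; rewrite eqn_pmul2l ?pgt0 // => /eqP.
Qed.

Lemma neqO0 w : w != O0 -> toC w != 0.
Proof. by apply: contra => /eqP h; apply/eqP; apply: toC_inj; rewrite h. Qed.

Lemma L1 S : fixed_conf R p n S -> conf (Cstar R) q (fS S) /\ (S O0 <-> e).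
Proof.
move=> [[y [iy _] ey] hrot].
set s := [seq y i | i <- enum 'I_n].
have us : uniq s by rewrite map_inj_uniq // enum_uniq.
have ss : size s = n by rewrite size_map size_enum_ord.
have memS : forall w, S w <-> w \in s.
  move=> w; rewrite -ey; split.
    by case=> i _ <-; apply: map_f; rewrite mem_enum.
  by case/mapP => i _ ->; exists i.
set s0 := seq.filter (fun w => w != O0) s.
set t := undup (map Pw s0).
have hc : forall u, u \in t -> count (fun x => Pw x == u) s0 = p.
  move=> u; rewrite mem_undup => /mapP [w hw ->].
  move: hw; rewrite mem_filter => /andP[wO ws].
  have w0 := @neqO0 w wO.
  set o := [seq rk k w | k <- iota 0 p].
  have uo : uniq o.
    rewrite map_inj_in_uniq ?iota_uniq // => k k'; rewrite !mem_iota /= !add0n.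
    move=> hk hk' /(congr1 toC); rewrite !toC_rk => /(@orbit_inj R p pp _ _ _ w0).
    by rewrite !modn_small.
  have hp : perm_eq (seq.filter (fun x => Pw x == Pw w) s0) o.
    apply: uniq_perm; [by rewrite !filter_uniq | exact: uo |].
    move=> v; rewrite !mem_filter; apply/idP/idP.
      case/andP => /eqP hv /andP[vO vs].
      have := congr1 toC hv; rewrite !toC_Pw => /(@fiber R p pp _ _ w0) [k hk hvk].
      have -> : v = rk k w by apply: toC_inj; rewrite toC_rk.
      by apply: map_f; rewrite mem_iota.
    case/mapP => k; rewrite mem_iota => /andP[_ hk] ->.
    rewrite Pw_rk eqxx /=; apply/andP; split.
      by apply/negP => /eqP h; move: (@rk_neq0 k w w0); rewrite h toC_O eqxx.
    by apply/memS; apply: (@fixed_rk S k w hrot); apply/memS.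
  by rewrite -size_filter (perm_size hp) size_map size_iota.
have hsize : size s0 = (p * size t)%N.
  apply: count_partition (undup_uniq _) _ hc.
  by move=> x hx; rewrite mem_undup map_f.
have hb : size s = (size s0 + (O0 \in s))%N.
  rewrite -(count_predC (fun w => w != O0) s) size_filter -count_uniq_mem //.
  by congr addn; apply: eq_count => w /=; rewrite negbK.
have [htq hbe] : size t = q /\ (O0 \in s) = e.
  by apply: arith_pq; rewrite -hsize -hb ss hn.
split; last by rewrite memS hbe; split => [->|->].
exists (fun i : 'I_q => nth O0 t i); last first.
  apply/seteqP; split => u.
    case=> i _ <-.
    have : nth O0 t i \in t by rewrite mem_nth // htq.
    rewrite mem_undup => /mapP [w hw ->].
    move: hw; rewrite mem_filter => /andP[wO ws].
    exists w => //; split; first by apply/memS.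
    by apply/CstarE; apply: neqO0.
  case=> w [Sw Cw] <-.
  have hin : Pw w \in t.
    rewrite mem_undup map_f // mem_filter (memS w).1 // andbT.
    by apply/negP => /eqP h; apply: Cw; rewrite h.
  have hi : (index (Pw w) t < q)%N by rewrite -htq index_mem.
  by exists (Ordinal hi) => //=; rewrite nth_index.
split.
  move=> i j /eqP; rewrite nth_uniq ?undup_uniq ?htq // => /eqP h.
  exact: val_inj.
move=> i; apply/CstarE.
have : nth O0 t i \in t by rewrite mem_nth // htq.
rewrite mem_undup => /mapP [w hw ->]; apply: Pw_neq0; apply: neqO0.
by move: hw; rewrite mem_filter => /andP[].
Qed.


Definition ext0 (r : 'I_q -> RR) (j : nat) : RR :=
  if @insub _ (fun j => j < q)%N _ j is Some i then r i else O0.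

Lemma ext0E r (i : 'I_q) : ext0 r i = r i.
Proof. by rewrite /ext0 valK. Qed.

Definition yv (r : 'I_q -> RR) (a : 'I_n) : RR :=
  if (a < p * q)%N then rk (a %% p) (ext0 r (a %/ p)) else O0.

Lemma div_lt {a : nat} : (a < p * q)%N -> (a %/ p < q)%N.
Proof. by move=> h; rewrite ltn_divLR // mulnC. Qed.

Lemma yv_lt r (a : 'I_n) (h : (a < p * q)%N) :
  yv r a = rk (a %% p) (r (Ordinal (div_lt h))).
Proof.
rewrite /yv h; congr rk.
exact: (ext0E r (Ordinal (div_lt h))).
Qed.

Lemma yv_ge r (a : 'I_n) : ~~ (a < p * q)%N -> yv r a = O0.
Proof. by rewrite /yv => /negbTE ->. Qed.

Section Construction.
Variables (x r : 'I_q -> RR).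
Hypotheses (hr : forall i, Pw (r i) = x i) (hx0 : forall i, toC (x i) != 0)
  (ix : injective x).

Lemma r_neq0 i : toC (r i) != 0.
Proof.
apply/eqP => h; move: (hx0 i); rewrite -hr toC_Pw h expr0n eqn0Ngt pgt0.
by rewrite eqxx.
Qed.

Lemma Pw_eq_toC w w' : Pw w = Pw w' -> toC w ^+ p = toC w' ^+ p.
Proof. by move=> /(congr1 toC); rewrite !toC_Pw. Qed.

Lemma yv_inj : injective (yv r).
Proof.
move=> a b.
case: (boolP (a < p * q)%N) => ha; case: (boolP (b < p * q)%N) => hb.
- rewrite !yv_lt; set i := Ordinal (div_lt ha); set j := Ordinal (div_lt hb) => h.
  have eij : i = j.
    apply: ix; rewrite -!hr; apply: toC_inj; rewrite !toC_Pw.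
    by have := congr1 (fun w => toC w ^+ p) h; rewrite /= !toC_rk !zXp.
  move: h; rewrite -eij => /(congr1 toC); rewrite !toC_rk.
  move=> /(@orbit_inj R p pp _ _ _ (r_neq0 i)); rewrite !modn_mod => hm.
  apply: val_inj => /=; rewrite (divn_eq a p) (divn_eq b p) hm.
  by have := congr1 val eij => /= ->.
- rewrite (@yv_lt r a ha) (@yv_ge r b hb) => h.
  by move: (rk_neq0 (a %% p) _ (r_neq0 (Ordinal (div_lt ha)))); rewrite h toC_O eqxx.
- rewrite (@yv_lt r b hb) (@yv_ge r a ha) => h.
  by move: (rk_neq0 (b %% p) _ (r_neq0 (Ordinal (div_lt hb)))); rewrite -h toC_O eqxx.
- move=> _; apply: val_inj => /=.
  have la : (nat_of_ord a < p * q + e)%N by rewrite -hn.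
  have lb : (nat_of_ord b < p * q + e)%N by rewrite -hn.
  have e1 : (nat_of_bool e <= 1)%N by case: (e).
  move: ha hb la lb e1; set m := (p * q)%N; set k := nat_of_bool e; lia.
Qed.

Lemma yv_range : range (yv r) = gT (range x).
Proof.
apply/seteqP; split => w.
  case=> a _ <-.
  case: (boolP (a < p * q)%N) => ha.
    by rewrite yv_lt //; left; rewrite /= Pw_rk hr; exists (Ordinal (div_lt ha)).
  rewrite yv_ge //; right; split => //.
  have la : (nat_of_ord a < p * q + e)%N by rewrite -hn.
  by move: ha la; case: (e) => //=; rewrite addn0 => /negbTE ->.
case=> [[i _ hi]|[he ->]].
  have hp : toC w ^+ p = toC (r i) ^+ p by apply: Pw_eq_toC; rewrite hr.
  have [k hk hwk] := @fiber R p pp _ _ (r_neq0 i) hp.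
  have ha : (i * p + k < p * q)%N.
    have := ltn_ord i; move: hk; set a := nat_of_ord i; nia.
  have han : (i * p + k < n)%N by rewrite hn; apply: (leq_trans ha); rewrite leq_addr.
  exists (Ordinal han) => //.
  rewrite (@yv_lt r (Ordinal han) ha); apply: toC_inj; rewrite toC_rk hwk.
  have e1 : ((i * p + k) %% p)%N = k by rewrite modnMDl modn_small.
  have e2 : Ordinal (div_lt ha) = i.
    by apply: val_inj => /=; rewrite divnMDl // divn_small // addn0.
  by rewrite /= e1 e2.
have han : (p * q < n)%N by rewrite hn he /= addn1.
by exists (Ordinal han) => //; rewrite yv_ge // /= ltnn.
Qed.

End Construction.



Lemma rk_O0 k : rk k O0 = O0.
Proof. by apply: toC_inj; rewrite toC_rk toC_O mulr0. Qed.

Lemma rk_back w : rotC p (rk p.-1 w) = w.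
Proof.
rewrite -rkS prednK //; apply: toC_inj; by rewrite toC_rk zp1 // mul1r.
Qed.

Lemma gT_rot T : rotC p @` gT T = gT T.
Proof.
apply/seteqP; split => w.
  case=> v hv <-; rewrite rotCE; case: hv => [hv|[he ->]].
    by left; rewrite /= Pw_rk.
  by right; rewrite rk_O0.
move=> hw; exists (rk p.-1 w); last exact: rk_back.
case: hw => [hw|[he ->]]; first by left; rewrite /= Pw_rk.
by right; rewrite rk_O0.
Qed.

Lemma root_Pw u : exists w, Pw w = u.
Proof.
have [v hv] := @root_exists R p (toC u) pgt0.
by exists (ofC v); apply: toC_inj; rewrite toC_Pw ofCK hv.
Qed.

Lemma L2 T : conf (Cstar R) q T -> fixed_conf R p n (gT T).
Proof.
case=> x [ix hxC] <-.
have hx0 : forall i, toC (x i) != 0 by move=> i; apply/CstarE.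
have [r hr] := choice (fun i => root_Pw (x i)).
split; last exact: gT_rot.
exists (yv r); last exact: (yv_range x r hr hx0).
by split => //; exact: (yv_inj x r hr hx0 ix).
Qed.

Lemma gTfS S : fixed_conf R p n S -> gT (fS S) = S.
Proof.
move=> hS; have [_ hO] := @L1 S hS; have hrot := hS.2.
apply/seteqP; split => w.
  case=> [[v [Sv Cv] hv]|[he ->]]; last exact/hO.
  have v0 : toC v != 0 by apply/CstarE.
  have := congr1 toC hv; rewrite !toC_Pw => /esym /(@fiber R p pp _ _ v0) [k _ hk].
  have -> : w = rk k v by apply: toC_inj; rewrite toC_rk.
  exact: fixed_rk.
move=> Sw; have [wO|wO] := eqVneq w O0.
  by right; split => //; apply/hO; rewrite -wO.
left; exists w => //; split => // h; move: wO; by rewrite h eqxx.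
Qed.

Lemma fSgT T : conf (Cstar R) q T -> fS (gT T) = T.
Proof.
case=> x [ix hxC] <-.
apply/seteqP; split => u.
  case=> v [hv Cv] <-; case: hv => [//|[_ hvO]].
  by exfalso; apply: Cv; rewrite hvO.
move=> hu; have [w hw] := root_Pw u.
exists w => //; split; first by left; rewrite /= hw.
apply/CstarE; apply/eqP => h0.
case: hu => i _ hi; move: (hxC i); rewrite hi -hw => /CstarE.
by rewrite toC_Pw h0 expr0n eqn0Ngt pgt0 eqxx.
Qed.


Lemma sqn (a : R) : `|a| ^+ 2 = a ^+ 2.
Proof. by rewrite -normrX ger0_norm ?sqr_ge0. Qed.

Lemma ballRR (x y : RR) (d : R) : ball x d y <-> (`|x.1 - y.1| < d /\ `|x.2 - y.2| < d).
Proof. by rewrite /ball /= /prod_ball -!ball_normE /ball_ /=. Qed.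

Lemma ballN (x y : RR) (d : R) : 0 < d -> ball x d y -> N (toC y - toC x) < 2 * d ^+ 2.
Proof.
move=> d0 /ballRR [h1 h2]; rewrite /N /=.
have e1 : (y.1 - x.1) ^+ 2 = `|x.1 - y.1| ^+ 2 by rewrite sqn -sqrrN opprB.
have e2 : (y.2 - x.2) ^+ 2 = `|x.2 - y.2| ^+ 2 by rewrite sqn -sqrrN opprB.
rewrite e1 e2.
have := normr_ge0 (x.1 - y.1); have := normr_ge0 (x.2 - y.2).
move: h1 h2; set a := `|x.1 - y.1|; set b := `|x.2 - y.2|; nra.
Qed.

Lemma Nball (x y : RR) (d : R) : 0 < d -> N (toC y - toC x) < d ^+ 2 -> ball x d y.
Proof.
move=> d0; rewrite /N /= => h; apply/ballRR.
have e1 : `|x.1 - y.1| ^+ 2 = (y.1 - x.1) ^+ 2 by rewrite sqn -sqrrN opprB.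
have e2 : `|x.2 - y.2| ^+ 2 = (y.2 - x.2) ^+ 2 by rewrite sqn -sqrrN opprB.
have := normr_ge0 (x.1 - y.1); have := normr_ge0 (x.2 - y.2).
have := sqr_ge0 (y.1 - x.1); have := sqr_ge0 (y.2 - x.2).
move: h e1 e2; set a := `|x.1 - y.1|; set b := `|x.2 - y.2|.
set a2 := (y.1 - x.1) ^+ 2; set b2 := (y.2 - x.2) ^+ 2; nra.
Qed.

Lemma open_N (U : set RR) x : open U -> U x ->
  exists2 d : R, 0 < d & forall y, N (toC y - toC x) < d -> U y.
Proof.
move=> oU Ux; have : nbhs x U by apply: open_nbhs_nbhs.
move/nbhs_ballP => [d d0 hd]; exists (d ^+ 2); first exact: exprn_gt0.
by move=> y hy; apply: hd; apply: Nball.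
Qed.

Lemma ball_open_in (x : RR) (d : R) : 0 < d -> open (ball x d) /\ ball x d x.
Proof. by move=> d0; split; [exact: ball_open | exact: ballxx]. Qed.

Lemma small_ball (d : R) : 0 < d -> exists2 h : R, 0 < h & 2 * h ^+ 2 <= d.
Proof.
move=> d0; exists (Num.min 1 (d / 2)); first by rewrite lt_min ltr01 divr_gt0.
have h1 : Num.min 1 (d / 2) <= 1 by rewrite ge_min lexx.
have h2 : Num.min 1 (d / 2) <= d / 2 by rewrite ge_min lexx orbT.
have h3 : 0 < Num.min 1 (d / 2) by rewrite lt_min ltr01 divr_gt0.
move: h1 h2 h3; set m := Num.min 1 (d / 2); nra.
Qed.


Lemma gcont (O : set (set RR)) : fixed_conf_opens R p n O ->
  conf_opens (Cstar R) q (gT @^-1` O `&` conf (Cstar R) q).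
Proof.
case=> V [[hVsub [W [hW hWe]]] ->].
apply: local_open; first by move=> S [].
move=> x0 [ix0 hx0C] [[hV0 hfix0] hconf0].
have hx00 : forall i, toC (x0 i) != 0 by move=> i; apply/CstarE.
have [r0 hr0] := choice (fun i => root_Pw (x0 i)).
set y0 := yv r0.
have iy0 : injective y0 := yv_inj x0 r0 hr0 hx00 ix0.
have ry0 : range y0 = gT (range x0) := yv_range x0 r0 hr0 hx00.
have Wy0 : W y0.
  have : ((fun x : 'I_n -> RR => range x) @^-1` V `&` conf_ord [set: RR] n) y0 by split => //; rewrite /= ry0.
  by rewrite -hWe => -[].
have [U [hU1 hU2]] := hW y0 Wy0.
have [d d0 hd] : exists2 d : R, 0 < d &
    forall a w, N (toC w - toC (y0 a)) < d -> U a w.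
  apply: (@exists_small R _ (fun a d => forall w, N (toC w - toC (y0 a)) < d -> U a w)).
    by move=> a; have [d d0 h] := @open_N (U a) (y0 a) (hU1 a).1 (hU1 a).2; exists d.
  by move=> a d1 d2 _ hle h w hw; apply: h; exact: lt_le_trans hw hle.
have [h h0 hh] := @small_ball (d ^+ p) (exprn_gt0 p d0).
exists (fun i => ball (x0 i) h); split; first by move=> i; apply: ball_open_in.
move=> x' [ix' hx'C] hx'b.
have hx'0 : forall i, toC (x' i) != 0 by move=> i; apply/CstarE.
have hroot : forall i, exists w, Pw w = x' i /\ N (toC w - toC (r0 i)) < d.
  move=> i; have := @ballN (x0 i) (x' i) h h0 (hx'b i).
  rewrite -hr0 toC_Pw => hN.
  have [w' hw'1 hw'2] :=
    @near_root R p pp d (toC (x' i)) (toC (r0 i)) d0 (lt_le_trans hN hh).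
  exists (ofC w'); rewrite ofCK; split => //; apply: toC_inj.
  by rewrite toC_Pw ofCK.
have [r' hr'] := choice hroot.
have hr'1 : forall i, Pw (r' i) = x' i by move=> i; case: (hr' i).
set y' := yv r'.
have iy' : injective y' := yv_inj x' r' hr'1 hx'0 ix'.
have ry' : range y' = gT (range x') := yv_range x' r' hr'1 hx'0.
have Wy' : W y'.
  apply: hU2 => a /=.
  case: (boolP (a < p * q)%N) => ha.
    rewrite /y' (@yv_lt r' a ha); apply: hd.
    rewrite /y0 (@yv_lt r0 a ha) !toC_rk -mulrBr NzX; exact: (hr' _).2.
  rewrite /y' (@yv_ge r' a ha) -(@yv_ge r0 a ha); exact: (hU1 a).2.
have : ((fun x : 'I_n -> RR => range x) @^-1` V `&` conf_ord [set: RR] n) y' by rewrite -hWe; split.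
case=> hVy' _.
have cT : conf (Cstar R) q (range x') by exists x'.
split; last exact: cT.
by split; [rewrite /= -ry' | exact: (@L2 _ cT)].
Qed.


Lemma fcore (O' : set (set RR)) (W : set ('I_q -> RR)) (y0 : 'I_n -> RR) :
  prodn_open q W ->
  W `&` conf_ord (Cstar R) q =
    (fun x : 'I_q -> RR => range x) @^-1` O' `&` conf_ord (Cstar R) q ->
  injective y0 -> fixed_conf R p n (range y0) -> O' (fS (range y0)) ->
  boxP _ n (fun S => fixed_conf R p n S -> O' (fS S)) y0.
Proof.
move=> hW hWe iy0 hfix hO'.
set S := range y0.
have [[x0 [ix0 hx0C] ex0] _] := @L1 S hfix.
have Wx0 : W x0.
  have : ((fun x : 'I_q -> RR => range x) @^-1` O' `&` conf_ord (Cstar R) q) x0.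
    by split; [rewrite /= ex0 | split].
  by rewrite -hWe => -[].
have [Bx [hBx1 hBx2]] := hW x0 Wx0.
have hj : forall i, exists a, toC (y0 a) != 0 /\ Pw (y0 a) = x0 i.
  move=> i; have : fS S (x0 i) by rewrite -ex0; exists i.
  by case=> v [[a _ <-] hC] hv; exists a; split => //; exact/CstarE.
have [j hj'] := choice hj.
have [d1 d10 hd1] : exists2 d : R, 0 < d &
    forall i w, N (toC w - toC (y0 (j i))) < d -> Bx i (Pw w).
  apply: (@exists_small R _
    (fun i d => forall w, N (toC w - toC (y0 (j i))) < d -> Bx i (Pw w))); last first.
    by move=> i d d' _ hle h w hw; apply: h; exact: lt_le_trans hw hle.
  move=> i; have [d d0 hd] := @open_N (Bx i) (x0 i) (hBx1 i).1 (hBx1 i).2.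
  have [d' d'0 hd'] := @powC_cont R p pp (toC (y0 (j i))) d d0.
  exists d' => // w hw; apply: hd; rewrite toC_Pw -(hj' i).2 toC_Pw; exact: hd'.
have [d2 d20 hd2] : exists2 d : R, 0 < d & forall ab : 'I_n * 'I_n,
    N (toC (y0 ab.1) - toC (y0 ab.2)) < d -> y0 ab.1 = y0 ab.2.
  apply: (@exists_small R _
    (fun ab d => N (toC (y0 ab.1) - toC (y0 ab.2)) < d -> y0 ab.1 = y0 ab.2)); last first.
    by move=> ab d d' _ hle h hw; apply: h; exact: lt_le_trans hw hle.
  move=> [a b] /=; have [eab|nab] := eqVneq (y0 a) (y0 b); first by exists 1.
  have hne : toC (y0 a) - toC (y0 b) != 0.
    by rewrite subr_eq0; apply: contra nab => /eqP /toC_inj ->.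
  exists (N (toC (y0 a) - toC (y0 b))); last by rewrite ltxx.
  rewrite lt_def N_ge0 andbT; apply: contra hne => /eqP /N_eq0 ->.
  by [].
have [d3 d30 hd3] : exists2 d : R, 0 < d & forall a, N (toC (y0 a)) < d -> y0 a = O0.
  apply: (@exists_small R _ (fun a d => N (toC (y0 a)) < d -> y0 a = O0)); last first.
    by move=> a d d' _ hle h hw; apply: h; exact: lt_le_trans hw hle.
  move=> a; have [ea|na] := eqVneq (y0 a) O0; first by exists 1.
  have hne := @neqO0 _ na.
  exists (N (toC (y0 a))); last by rewrite ltxx.
  rewrite lt_def N_ge0 andbT; apply: contra hne => /eqP /N_eq0 ->.
  by [].
set rho := Num.min d1 (Num.min d2 d3 / 4).
have m2 : Num.min d2 d3 <= d2 by rewrite ge_min lexx.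
have m3 : Num.min d2 d3 <= d3 by rewrite ge_min lexx orbT.
have m0 : 0 < Num.min d2 d3 by rewrite lt_min d20 d30.
have rho0 : 0 < rho by rewrite lt_min d10 divr_gt0.
have r1 : rho <= d1 by rewrite ge_min lexx.
have r4 : rho <= Num.min d2 d3 / 4 by rewrite ge_min lexx orbT.
have r2 : 4 * rho <= d2 by move: r4 m2; set m := Num.min d2 d3; lra.
have r3 : 4 * rho <= d3 by move: r4 m3; set m := Num.min d2 d3; lra.
have [h h0 hh] := @small_ball rho rho0.
exists (fun a => ball (y0 a) h); split; first by move=> a; apply: ball_open_in.
move=> z iz hzb hfixz.
have hz : forall a, N (toC (z a) - toC (y0 a)) < rho.
  by move=> a; apply: (lt_le_trans (@ballN (y0 a) (z a) h h0 (hzb a))).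
have hrotz := hfixz.2.
have F3 : forall m m' m'' k, toC (z m') = zeta R p ^+ k * toC (z m) ->
    toC (y0 m'') = zeta R p ^+ k * toC (y0 m) -> y0 m' = y0 m''.
  move=> m m' m'' k e1 e2; apply: (hd2 (m', m'')) => /=.
  have t := N_tri (toC (y0 m')) (toC (z m')) (toC (y0 m'')).
  have t1 : N (toC (y0 m') - toC (z m')) < rho by rewrite NB; exact: hz.
  have t2 : N (toC (z m') - toC (y0 m'')) < rho.
    by rewrite e1 e2 -mulrBr NzX //; exact: hz.
  lra.
have F1 : forall i, toC (z (j i)) != 0.
  move=> i; apply/eqP => h0'.
  have := hz (j i); rewrite h0' sub0r NN => hN.
  have hy : y0 (j i) = O0 by apply: hd3; lra.
  by move: (hj' i).1; rewrite hy toC_O eqxx.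
have F4 : forall m, y0 m = O0 -> z m = O0.
  move=> m hm; apply: contrapT => hzm.
  have zm0 : toC (z m) != 0 by apply: neqO0; apply/eqP.
  have : range z (rk 1 (z m)) by apply: (@fixed_rk _ 1 _ hrotz); exists m.
  case=> m'' _ hm''.
  have hy'' : y0 m'' = O0.
    apply: hd3.
    have t := ND_le (toC (y0 m'') - toC (z m'')) (toC (z m'')).
    rewrite subrK in t.
    have t1 : N (toC (y0 m'') - toC (z m'')) < rho by rewrite NB; exact: hz.
    have t2 : N (toC (z m'')) < rho.
      have := hz m; rewrite hm toC_O subr0 => hh'.
      by rewrite hm'' toC_rk NzX.
    lra.
  have em : m'' = m by apply: iy0; rewrite hy'' hm.
  rewrite em in hm''.
  have h1 := congr1 toC hm''; rewrite toC_rk expr1 in h1.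
  have : (zeta R p - 1) * toC (z m) = 0 by rewrite mulrBl mul1r -h1 subrr.
  move/eqP; rewrite mulf_eq0 subr_eq0 (negbTE zm0) orbF.
  by rewrite (negbTE (@zeta_neq1 R p pgt1)).
set x := fun i => Pw (z (j i)).
have ixz : injective x.
  move=> i i' hx.
  have := @Pw_eq_toC _ _ hx => /esym /(@fiber R p pp _ _ (F1 i)) [k _ hk].
  have : range y0 (rk k (y0 (j i))) by apply: (@fixed_rk _ k _ hfix.2); exists (j i).
  case=> m'' _ hm''.
  have e2 : toC (y0 m'') = zeta R p ^+ k * toC (y0 (j i)) by rewrite hm'' toC_rk.
  have ey := F3 _ _ _ _ hk e2.
  have : x0 i' = x0 i by rewrite -(hj' i').2 -(hj' i).2 ey hm'' Pw_rk.
  by move/ix0.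
have hxC : forall i, Cstar R (x i).
  by move=> i; apply/CstarE; apply: Pw_neq0; apply: F1.
have hxb : forall i, Bx i (x i).
  by move=> i; apply: hd1; apply: (lt_le_trans (hz _)).
have Wx : W x by apply: hBx2.
have : ((fun x : 'I_q -> RR => range x) @^-1` O' `&` conf_ord (Cstar R) q) x.
  by rewrite -hWe; split => //; split.
case=> hO'x _.
suff -> : fS (range z) = range x by [].
apply/seteqP; split => u.
  case=> v [[m _ <-] hCv] <-.
  have zm0 : toC (z m) != 0 by apply/CstarE.
  have ym0 : y0 m != O0.
    by apply/eqP => hm; move: zm0; rewrite (F4 m hm) toC_O eqxx.
  have : fS S (Pw (y0 m)).
    by exists (y0 m) => //; split; [exists m | apply/CstarE; exact: neqO0].
  rewrite -ex0; case=> i _ hi.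
  have := @Pw_eq_toC _ _ (etrans (hj' i).2 hi).
  move=> /esym /(@fiber R p pp _ _ (hj' i).1) [k _ hk].
  have : range z (rk k (z (j i))) by apply: (@fixed_rk _ k _ hrotz); exists (j i).
  case=> m' _ hm'.
  have e1 : toC (z m') = zeta R p ^+ k * toC (z (j i)) by rewrite hm' toC_rk.
  have ey := F3 _ _ _ _ e1 hk.
  have em : m' = m by apply: iy0.
  by exists i => //; rewrite /x -em hm' Pw_rk.
case=> i _ <-.
exists (z (j i)) => //; split; [by exists (j i) | apply/CstarE; exact: F1].
Qed.

Lemma fcont (O' : set (set RR)) : conf_opens (Cstar R) q O' ->
  fixed_conf_opens R p n (fS @^-1` O' `&` fixed_conf R p n).
Proof.
case=> hsub [W [hW hWe]].
set G := fun S => fixed_conf R p n S -> O' (fS S).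
exists [set S | exists y, injective y /\ boxP _ n G y /\ range y = S]; split.
  split.
    by move=> S [y [iy [_ <-]]]; exists y.
  exists (boxP _ n G); split; first exact: boxP_open.
  apply/seteqP; split => y [hb hc].
    by split => //; exists y; split; [exact: hc.1 | split].
  split => //; case: hb => y' [iy' [hb' ey']].
  exact: (@boxP_perm _ n G y y' hc.1 iy' (esym ey') hb').
apply/seteqP; split => S.
  case=> hO' hfix; split => //.
  case: (hfix) => -[y0 [iy0 _] ey0] _.
  exists y0; split => //; split => //.
  by apply: (@fcore O' W y0 hW hWe iy0); rewrite ey0.
case=> -[y [iy [[B [hB1 hB2]] ey]]] hfix; split => //.
rewrite -ey; apply: (hB2 y iy) => [i|]; [exact: (hB1 i).2 | by rewrite ey].
Qed.


Lemma main_sec : homeomorphic (fixed_conf R p n) (fixed_conf_opens R p n)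
  (conf (Cstar R) q) (conf_opens (Cstar R) q).
Proof.
exists fS, gT.
split; first by move=> S hS; exact: (@L1 S hS).1.
split; first exact: L2.
split; first exact: gTfS.
split; first exact: fSgT.
split; first by move=> O' hO'; exact: fcont.
by move=> O hO; exact: gcont.
Qed.

End Main.

Theorem mainTheorem11 (R : realType) (p q n : nat) :
  prime p -> (n = p * q \/ n = p * q + 1)%N ->
  homeomorphic (fixed_conf R p n) (fixed_conf_opens R p n)
               (conf (Cstar R) q) (conf_opens (Cstar R) q).
Proof.
move=> pp hn.
have hn' : n = (p * q + (n != p * q))%N.
  case: hn => ->; first by rewrite eqxx addn0.
  by have -> : (p * q + 1 != p * q)%N by rewrite -{2}[(p * q)%N]addn0 eqn_add2l.
exact: (@main_sec R p q n (n != p * q) pp hn').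
Qed.
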